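(* Let $R$ be a commutative ring with identity and $E$ an $R$-module. The following are equivalent: (1) $E$ is absolutely pure; (2) $E$ is $u$-$\mathfrak p$-absolutely pure for every prime ideal $\mathfrak p$ of $R$; (3) $E$ is $u$-$\mathfrak m$-absolutely pure for every maximal ideal $\mathfrak m$ of $R$.
   Context: For a multiplicative subset $S$ of $R$: a short sequence $0\to A\xrightarrow{f}B\xrightarrow{g}C\to 0$ is $u$-$S$-exact if there is $s\in S$ with $s\,\mathrm{Ker}(f)=0$, $s\,\mathrm{Ker}(g)\subseteq\mathrm{Im}(f)$, $s\,\mathrm{Im}(f)\subseteq\mathrm{Ker}(g)$, $sC\subseteq\mathrm{Im}(g)$; it is $u$-$S$-pure if tensoring with any $R$-module gives a short $u$-$S$-exact sequence; an $R$-module $E$ is $u$-$S$-absolutely pure if every short $u$-$S$-exact sequence $0\to E\to B\to C\to 0$ beginning with $E$ is $u$-$S$-pure. For a prime ideal $\mathfrak p$, $E$ is $u$-$\mathfrak p$-absolutely pure if it is $u$-$(R\setminus\mathfrak p)$-absolutely pure. $E$ is absolutely pure if it is a pure submodule of every module containing it (equivalently $\mathrm{Ext}^1_R(N,E)=0$ for all finitely presented $R$-modules $N$). *)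

(* Defs.v *)
From HB Require Import structures.
From mathcomp Require Import all_boot all_order all_algebra.
Set Implicit Arguments. Unset Strict Implicit. Unset Printing Implicit Defensive.
Import GRing.Theory.
Local Open Scope ring_scope.

(* Commutative rings with identity: [comPzRingType] (the zero ring allowed).
   Modules: [lmodType R].  Linear maps: [{linear A -> B}]. *)

Section Defs.
Variable R : comPzRingType.

Definition ideal (I : R -> Prop) : Prop :=
  [/\ I 0, (forall x y, I x -> I y -> I (x + y)) & (forall r x, I x -> I (r * x))].

Definition prime_ideal (P : R -> Prop) : Prop :=
  [/\ ideal P, ~ P 1 & (forall x y, P (x * y) -> P x \/ P y)].

Definition maximal_ideal (M : R -> Prop) : Prop :=
  [/\ ideal M, ~ M 1 &
      (forall J : R -> Prop, ideal J -> (forall x, M x -> J x) ->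
         (forall x, J x <-> M x) \/ J 1)].

Definition multiplicative_subset (S : R -> Prop) : Prop :=
  S 1 /\ (forall s t, S s -> S t -> S (s * t)).

Definition u_S_exact (S : R -> Prop) (A B C : lmodType R)
    (f : A -> B) (g : B -> C) : Prop :=
  exists2 s, S s &
   [/\ (forall a, f a = 0 -> s *: a = 0),
       (forall b, g b = 0 -> exists a, f a = s *: b),
       (forall a, g (s *: f a) = 0)
     & (forall c, exists b, g b = s *: c)].

(** Tensor products, given by their universal property: [beta : A -> N -> T]
    is R-bilinear and every R-bilinear map out of A x N factors uniquely
    through a linear map out of T. *)
Definition bilinear (A N M : lmodType R) (phi : A -> N -> M) : Prop :=
  [/\ (forall a1 a2 n, phi (a1 + a2) n = phi a1 n + phi a2 n),
      (forall r a n, phi (r *: a) n = r *: phi a n),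
      (forall a n1 n2, phi a (n1 + n2) = phi a n1 + phi a n2)
    & (forall r a n, phi a (r *: n) = r *: phi a n)].

Definition is_tensor (A N T : lmodType R) (beta : A -> N -> T) : Prop :=
  bilinear beta /\
  forall (M : lmodType R) (phi : A -> N -> M), bilinear phi ->
    exists h : {linear T -> M},
      (forall a n, h (beta a n) = phi a n) /\
      (forall h' : {linear T -> M}, (forall a n, h' (beta a n) = phi a n) ->
         forall t, h' t = h t).

Definition tensor_map (A B N TA TB : lmodType R) (f : A -> B)
    (betaA : A -> N -> TA) (betaB : B -> N -> TB) (fN : TA -> TB) : Prop :=
  forall a n, fN (betaA a n) = betaB (f a) n.

Definition u_S_pure (S : R -> Prop) (A B C : lmodType R)
    (f : A -> B) (g : B -> C) : Prop :=
  forall (N TA TB TC : lmodType R)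
         (betaA : A -> N -> TA) (betaB : B -> N -> TB) (betaC : C -> N -> TC),
    is_tensor betaA -> is_tensor betaB -> is_tensor betaC ->
    forall (fN : {linear TA -> TB}) (gN : {linear TB -> TC}),
      tensor_map f betaA betaB fN -> tensor_map g betaB betaC gN ->
      u_S_exact S fN gN.

Definition u_S_absolutely_pure (S : R -> Prop) (E : lmodType R) : Prop :=
  forall (B C : lmodType R) (f : {linear E -> B}) (g : {linear B -> C}),
    u_S_exact S f g -> u_S_pure S f g.

Definition u_p_absolutely_pure (p : R -> Prop) (E : lmodType R) : Prop :=
  u_S_absolutely_pure (fun r => ~ p r) E.

Definition pure_mono (E B : lmodType R) (f : E -> B) : Prop :=
  injective f /\
  forall (N TE TB : lmodType R) (betaE : E -> N -> TE) (betaB : B -> N -> TB),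
    is_tensor betaE -> is_tensor betaB ->
    forall fN : {linear TE -> TB}, tensor_map f betaE betaB fN -> injective fN.

(** E is absolutely pure: E is a pure submodule of every module containing it,
    i.e. every R-linear embedding of E into a module is a pure monomorphism. *)
Definition absolutely_pure (E : lmodType R) : Prop :=
  forall (B : lmodType R) (f : {linear E -> B}), injective f -> pure_mono f.

End Defs.

(* Main.v *)
Require Import Defs.
From HB Require Import structures.
From mathcomp Require Import all_boot all_order all_algebra.
From mathcomp Require Import boolp.
From mathcomp Require classical_sets.
Require Import Defs.
Set Implicit Arguments. Unset Strict Implicit. Unset Printing Implicit Defensive.
Import GRing.Theory.
Local Open Scope ring_scope.

Section Quot.
Variable R : comPzRingType.
Record qdata := QData {
  q_qW : choiceType;
  q_eqv : q_qW -> q_qW -> Prop;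
  q_wadd : q_qW -> q_qW -> q_qW;
  q_wopp : q_qW -> q_qW;
  q_wzero : q_qW;
  q_wscale : R -> q_qW -> q_qW;
  q_eqv_refl : forall x, q_eqv x x;
  q_eqv_sym : forall x y, q_eqv x y -> q_eqv y x;
  q_eqv_trans : forall x y z, q_eqv x y -> q_eqv y z -> q_eqv x z;
  q_wadd_c : forall x x' y y', q_eqv x x' -> q_eqv y y' -> q_eqv (q_wadd x y) (q_wadd x' y');
  q_wopp_c : forall x x', q_eqv x x' -> q_eqv (q_wopp x) (q_wopp x');
  q_wscale_c : forall r x x', q_eqv x x' -> q_eqv (q_wscale r x) (q_wscale r x');
  q_waddA : forall x y z, q_eqv (q_wadd x (q_wadd y z)) (q_wadd (q_wadd x y) z);
  q_waddC : forall x y, q_eqv (q_wadd x y) (q_wadd y x);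
  q_wadd0 : forall x, q_eqv (q_wadd q_wzero x) x;
  q_waddN : forall x, q_eqv (q_wadd (q_wopp x) x) q_wzero;
  q_wscaleA : forall a b x, q_eqv (q_wscale a (q_wscale b x)) (q_wscale (a * b) x);
  q_wscale1 : forall x, q_eqv (q_wscale 1 x) x;
  q_wscaleDr : forall a x y, q_eqv (q_wscale a (q_wadd x y)) (q_wadd (q_wscale a x) (q_wscale a y));
  q_wscaleDl : forall a b x, q_eqv (q_wscale (a + b) x) (q_wadd (q_wscale a x) (q_wscale b x)) }.
Variable D : qdata.
Local Notation W := (@q_qW D).
Local Notation eqv := (@q_eqv D).
Local Notation wadd := (@q_wadd D).
Local Notation wopp := (@q_wopp D).
Local Notation wzero := (@q_wzero D).
Local Notation wscale := (@q_wscale D).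
Local Notation eqv_refl := (@q_eqv_refl D).
Local Notation eqv_sym := (@q_eqv_sym D).
Local Notation eqv_trans := (@q_eqv_trans D).
Local Notation wadd_c := (@q_wadd_c D).
Local Notation wopp_c := (@q_wopp_c D).
Local Notation wscale_c := (@q_wscale_c D).
Local Notation waddA := (@q_waddA D).
Local Notation waddC := (@q_waddC D).
Local Notation wadd0 := (@q_wadd0 D).
Local Notation waddN := (@q_waddN D).
Local Notation wscaleA := (@q_wscaleA D).
Local Notation wscale1 := (@q_wscale1 D).
Local Notation wscaleDr := (@q_wscaleDr D).
Local Notation wscaleDl := (@q_wscaleDl D).

Definition canon (x : W) : W :=
  xchoose (ex_intro (fun y => `[< eqv x y >]) x (introT (asboolP _) (eqv_refl x))).
Lemma canon_eqv x : eqv x (canon x).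
Proof. exact/asboolP/(xchooseP (ex_intro (fun y => `[< eqv x y >]) x (introT (asboolP _) (eqv_refl x)))). Qed.
Lemma canon_eq x y : eqv x y -> canon x = canon y.
Proof.
move=> h; apply: eq_xchoose => z.
apply/asboolP/asboolP => ?; [exact: eqv_trans (eqv_sym h) _ | exact: eqv_trans h _].
Qed.
Lemma canon_id x : canon (canon x) = canon x.
Proof. by apply: canon_eq; apply: eqv_sym; apply: canon_eqv. Qed.


Definition quot := {x : W | canon x == x}.
HB.instance Definition _ := Choice.on quot.
Definition qpi (x : W) : quot := exist _ (canon x) (introT eqP (canon_id x)).
Definition qrepr (q : quot) : W := val q.
Lemma qreprK q : qpi (qrepr q) = q.
Proof. case: q => x hx; apply: val_inj => /=; exact/eqP. Qed.
Lemma qpi_eq x y : eqv x y -> qpi x = qpi y.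
Proof. by move=> h; apply: val_inj; rewrite /= (canon_eq h). Qed.
Lemma qpi_eqv x y : qpi x = qpi y -> eqv x y.
Proof.
move=> /(congr1 val) /= h; apply: eqv_trans (canon_eqv x) _.
by rewrite h; apply: eqv_sym; apply: canon_eqv.
Qed.
Lemma qrepr_eqv x : eqv (qrepr (qpi x)) x.
Proof. exact/eqv_sym/canon_eqv. Qed.

Definition qadd (p q : quot) := qpi (wadd (qrepr p) (qrepr q)).
Definition qopp (p : quot) := qpi (wopp (qrepr p)).
Definition qzero := qpi wzero.
Definition qscale r (p : quot) := qpi (wscale r (qrepr p)).

Lemma qpi_add x y : qpi (wadd x y) = qadd (qpi x) (qpi y).
Proof. apply: qpi_eq; apply: wadd_c; exact/eqv_sym/qrepr_eqv. Qed.
Lemma qpi_opp x : qpi (wopp x) = qopp (qpi x).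
Proof. apply: qpi_eq; apply: wopp_c; exact/eqv_sym/qrepr_eqv. Qed.
Lemma qpi_scale r x : qpi (wscale r x) = qscale r (qpi x).
Proof. apply: qpi_eq; apply: wscale_c; exact/eqv_sym/qrepr_eqv. Qed.

Lemma quot_ind (P : quot -> Prop) : (forall x, P (qpi x)) -> forall q, P q.
Proof. by move=> h q; rewrite -(qreprK q). Qed.

Lemma qaddA : associative qadd.
Proof.
elim/quot_ind => x; elim/quot_ind => y; elim/quot_ind => z.
by rewrite -!qpi_add; apply: qpi_eq; apply: waddA.
Qed.
Lemma qaddC : commutative qadd.
Proof. elim/quot_ind => x; elim/quot_ind => y; rewrite -!qpi_add; apply: qpi_eq; apply: waddC. Qed.
Lemma qadd0 : left_id qzero qadd.
Proof. elim/quot_ind => x; rewrite -!qpi_add; apply: qpi_eq; apply: wadd0. Qed.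
Lemma qaddN : left_inverse qzero qopp qadd.
Proof. elim/quot_ind => x; rewrite -qpi_opp -!qpi_add; apply: qpi_eq; apply: waddN. Qed.

HB.instance Definition _ := GRing.isZmodule.Build quot qaddA qaddC qadd0 qaddN.

Lemma qpiD x y : qpi (wadd x y) = qpi x + qpi y.
Proof. exact: qpi_add. Qed.

Lemma qscaleA a b v : qscale a (qscale b v) = qscale (a * b) v.
Proof. elim/quot_ind: v => x; rewrite -!qpi_scale; apply: qpi_eq; apply: wscaleA. Qed.
Lemma qscale1 : left_id 1 qscale.
Proof. elim/quot_ind => x; rewrite -!qpi_scale; apply: qpi_eq; apply: wscale1. Qed.
Lemma qscaleDr : right_distributive qscale +%R.
Proof.
move=> a; elim/quot_ind => x; elim/quot_ind => y.
by rewrite -qpiD -!qpi_scale -qpiD; apply: qpi_eq; apply: wscaleDr.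
Qed.
Lemma qscaleDl v : {morph qscale^~ v : a b / a + b}.
Proof.
elim/quot_ind: v => x a b.
by rewrite -!qpi_scale -qpiD; apply: qpi_eq; apply: wscaleDl.
Qed.
HB.instance Definition _ := GRing.Zmodule_isLmodule.Build R quot qscaleA qscale1 qscaleDr qscaleDl.

Lemma qpiZ r x : qpi (wscale r x) = r *: qpi x.
Proof. exact: qpi_scale. Qed.
Lemma qpi0 : qpi wzero = 0.
Proof. by []. Qed.
End Quot.

Section Lin.
Variables (R : comPzRingType) (U V : lmodType R) (f : U -> V) (hf : linear f).
Definition linw (_ : linear f) := f.
HB.instance Definition _ := GRing.isLinear.Build R U V *:%R (linw hf) hf.
End Lin.

Section TensorLemmas.
Variable R : comPzRingType.

Lemma bilinear_lin (A N T M : lmodType R) (beta : A -> N -> T) (h : {linear T -> M}) :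
  bilinear beta -> bilinear (fun a n => h (beta a n)).
Proof.
case=> h1 h2 h3 h4; split=> *; by rewrite ?h1 ?h2 ?h3 ?h4 ?linearD ?linearZ.
Qed.

Lemma tensor_ext (A N T : lmodType R) (beta : A -> N -> T) (ht : is_tensor beta)
  (M : lmodType R) (h1 h2 : {linear T -> M}) :
  (forall a n, h1 (beta a n) = h2 (beta a n)) -> forall t, h1 t = h2 t.
Proof.
move=> e t; case: ht => bl /(_ M _ (bilinear_lin h2 bl)) [h [hb hu]].
by rewrite (hu h1 e) (hu h2 (fun _ _ => erefl)).
Qed.

Lemma tensor_lift (A N T : lmodType R) (beta : A -> N -> T) (ht : is_tensor beta)
  (M : lmodType R) (phi : A -> N -> M) : bilinear phi ->
  exists h : {linear T -> M}, forall a n, h (beta a n) = phi a n.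
Proof. by case: ht => _ /(_ M phi) H /H [h [hb _]]; exists h. Qed.
End TensorLemmas.

Section TensorCon.
Variables (R : comPzRingType) (A N : lmodType R).
Definition tW : choiceType := seq (R * A * N)%type.
Definition topp (x : tW) : tW := map (fun t => ((- t.1.1, t.1.2), t.2)) x.
Definition tscale (r : R) (x : tW) : tW := map (fun t => ((r * t.1.1, t.1.2), t.2)) x.

Inductive tgen : tW -> tW -> Prop :=
| tg_addA c a1 a2 n : tgen [:: ((c, a1 + a2), n)] [:: ((c, a1), n); ((c, a2), n)]
| tg_addN c a n1 n2 : tgen [:: ((c, a), n1 + n2)] [:: ((c, a), n1); ((c, a), n2)]
| tg_sclA c r a n : tgen [:: ((c, r *: a), n)] [:: ((c * r, a), n)]
| tg_sclN c r a n : tgen [:: ((c, a), r *: n)] [:: ((c * r, a), n)]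
| tg_comm x y : tgen (x ++ y) (y ++ x)
| tg_inv x : tgen (topp x ++ x) [::]
| tg_sclD a b x : tgen (tscale (a + b) x) (tscale a x ++ tscale b x).

Record tgood (Rl : tW -> tW -> Prop) : Prop := TGood {
  tg_refl : forall x, Rl x x;
  tg_sym : forall x y, Rl x y -> Rl y x;
  tg_trans : forall x y z, Rl x y -> Rl y z -> Rl x z;
  tg_cat : forall x x' y y', Rl x x' -> Rl y y' -> Rl (x ++ y) (x' ++ y');
  tg_opp : forall x x', Rl x x' -> Rl (topp x) (topp x');
  tg_scale : forall r x x', Rl x x' -> Rl (tscale r x) (tscale r x');
  tg_gen : forall x y, tgen x y -> Rl x y }.

Definition teqv (x y : tW) : Prop := forall Rl, tgood Rl -> Rl x y.

Lemma teqv_good : tgood teqv.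
Proof.
split.
- by move=> x Rl [].
- by move=> x y h Rl g; apply: (tg_sym g); apply: h.
- by move=> x y z h1 h2 Rl g; apply: (tg_trans g (h1 _ g) (h2 _ g)).
- by move=> x x' y y' h1 h2 Rl g; apply: (tg_cat g (h1 _ g) (h2 _ g)).
- by move=> x x' h Rl g; apply: (tg_opp g (h _ g)).
- by move=> r x x' h Rl g; apply: (tg_scale g); apply: h.
- by move=> x y h Rl g; apply: (tg_gen g h).
Qed.

Definition tdata : qdata R.
refine (@QData R tW teqv cat topp [::] tscale
  (tg_refl teqv_good) (tg_sym teqv_good) (tg_trans teqv_good)
  (tg_cat teqv_good) (tg_opp teqv_good) (tg_scale teqv_good) _ _ _ _ _ _ _ _).
- by move=> x y z; rewrite catA; apply: (tg_refl teqv_good).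
- by move=> x y; apply: (tg_gen teqv_good); apply: tg_comm.
- by move=> x; apply: (tg_refl teqv_good).
- by move=> x; apply: (tg_gen teqv_good); apply: tg_inv.
- move=> a b x; have -> : tscale a (tscale b x) = tscale (a * b) x.
    by elim: x => //= t x ->; rewrite mulrA.
  exact: (tg_refl teqv_good).
- move=> x; have -> : tscale 1 x = x.
    by elim: x => //= [[[c a] n] x] ->; rewrite mul1r.
  exact: (tg_refl teqv_good).
- by move=> a x y; rewrite /tscale map_cat; apply: (tg_refl teqv_good).
- by move=> a b x; apply: (tg_gen teqv_good); apply: tg_sclD.
Defined.
End TensorCon.

Section TensorProp.
Variables (R : comPzRingType) (A N : lmodType R).
Definition tensT : lmodType R := quot (tdata A N).
Definition tpi (x : tW A N) : tensT := @qpi R (tdata A N) x.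
Definition tbeta (a : A) (n : N) : tensT := tpi [:: ((1, a), n)].

Lemma tpi_cat x y : tpi (x ++ y) = tpi x + tpi y.
Proof. exact: (qpiD (D := tdata A N)). Qed.
Lemma tpi_scale r x : tpi (tscale r x) = r *: tpi x.
Proof. exact: (qpiZ (D := tdata A N)). Qed.
Lemma tpi_nil : tpi [::] = 0.
Proof. by []. Qed.
Lemma tpi_gen x y : tgen x y -> tpi x = tpi y.
Proof. by move=> h; apply: (qpi_eq (D := tdata A N)); apply: (tg_gen (teqv_good A N)). Qed.
Lemma tpi1 c a n : tpi [:: ((c, a), n)] = c *: tbeta a n.
Proof. by rewrite /tbeta -tpi_scale /tscale /= mulr1. Qed.

Section Eval.
Variables (M : lmodType R) (phi : A -> N -> M).
Hypothesis bphi : bilinear phi.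
Definition teval (x : tW A N) : M := \sum_(t <- x) t.1.1 *: phi t.1.2 t.2.
Lemma teval_cat x y : teval (x ++ y) = teval x + teval y.
Proof. by rewrite /teval big_cat. Qed.
Lemma teval_opp x : teval (topp x) = - teval x.
Proof.
elim: x => [|t x IH]; first by rewrite /teval !big_nil oppr0.
by rewrite /topp /= /teval !big_cons -/(topp x) -/(teval _) IH -/(teval _) opprD scaleNr.
Qed.
Lemma teval_scale r x : teval (tscale r x) = r *: teval x.
Proof.
elim: x => [|t x IH]; first by rewrite /teval !big_nil scaler0.
by rewrite /tscale /= /teval !big_cons -/(tscale _ x) -/(teval _) IH -/(teval _) scalerDr scalerA.
Qed.
Lemma teval_gen x y : tgen x y -> teval x = teval y.
Proof.
case: bphi => b1 b2 b3 b4.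
case=> [c a1 a2 n|c a n1 n2|c r a n|c r a n|x' y'|x'|a b x'].
- by rewrite /teval !big_cons !big_nil /= b1 scalerDr !addr0.
- by rewrite /teval !big_cons !big_nil /= b3 scalerDr !addr0.
- by rewrite /teval !big_cons !big_nil /= b2 scalerA.
- by rewrite /teval !big_cons !big_nil /= b4 scalerA.
- by rewrite !teval_cat addrC.
- by rewrite teval_cat teval_opp addNr /teval big_nil.
- by rewrite teval_cat !teval_scale scalerDl.
Qed.
Lemma teval_eqv x y : teqv x y -> teval x = teval y.
Proof.
move=> h; apply: (h (fun x y => teval x = teval y)); split.
- by [].
- by move=> ? ? ->.
- by move=> ? ? ? -> ->.
- by move=> ? ? ? ? e1 e2; rewrite !teval_cat e1 e2.
- by move=> ? ? e; rewrite !teval_opp e.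
- by move=> ? ? ? e; rewrite !teval_scale e.
- exact: teval_gen.
Qed.
Lemma teval_tpi x : teval (qrepr (tpi x)) = teval x.
Proof. apply: teval_eqv; exact: (qrepr_eqv (D := tdata A N)). Qed.
End Eval.

Lemma tpi_ind (P : tensT -> Prop) : (forall x, P (tpi x)) -> forall t, P t.
Proof. exact: (quot_ind (D := tdata A N)). Qed.

Lemma tensor_is_tensor : is_tensor tbeta.
Proof.
split.
  split.
  - by move=> a1 a2 n; rewrite /tbeta -tpi_cat; apply: tpi_gen; apply: tg_addA.
  - move=> r a n; rewrite /tbeta -tpi_scale /tscale /= mulr1; apply: tpi_gen.
    by have := tg_sclA 1 r a n; rewrite mul1r.
  - by move=> a n1 n2; rewrite /tbeta -tpi_cat; apply: tpi_gen; apply: tg_addN.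
  - move=> r a n; rewrite /tbeta -tpi_scale /tscale /= mulr1; apply: tpi_gen.
    by have := tg_sclN 1 r a n; rewrite mul1r.
move=> M phi bphi.
pose h (q : tensT) := teval phi (qrepr q).
have hlin : linear h.
  move=> a; elim/tpi_ind => x; elim/tpi_ind => y.
  by rewrite -tpi_scale -tpi_cat /h !teval_tpi // teval_cat // teval_scale.
exists (linw hlin); split.
  by move=> a n; rewrite /= /linw /h /tbeta teval_tpi // /teval big_cons big_nil scale1r addr0.
move=> h' eh'; elim/tpi_ind => x; rewrite /= /linw /h teval_tpi //.
elim: x => [|t x IH]; first by rewrite tpi_nil linear0 /teval big_nil.
case: t => [[c a] n]; rewrite -cat1s tpi_cat linearD IH teval_cat tpi1 linearZ eh'.
by rewrite /teval big_cons big_nil addr0.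
Qed.
End TensorProp.

Lemma tensor_exists (R : comPzRingType) (A N : lmodType R) :
  exists (T : lmodType R) (beta : A -> N -> T), is_tensor beta.
Proof. by exists (tensT A N), (@tbeta R A N); apply: tensor_is_tensor. Qed.

Lemma scalerC (R : comPzRingType) (V : lmodType R) (a b : R) (v : V) :
  a *: (b *: v) = b *: (a *: v).
Proof. by rewrite !scalerA mulrC. Qed.

Section ModQuot.
Variables (R : comPzRingType) (V : lmodType R) (P : V -> Prop).
Hypotheses (P0 : P 0) (PD : forall x y, P x -> P y -> P (x + y))
           (PZ : forall r x, P x -> P (r *: x)).

Lemma PN x : P x -> P (- x).
Proof. by move=> h; rewrite -scaleN1r; apply: PZ. Qed.

Definition mdata : qdata R.
refine (@QData R V (fun x y => P (x - y)) +%R -%R 0 *:%R _ _ _ _ _ _ _ _ _ _ _ _ _ _).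
- by move=> x; rewrite subrr.
- by move=> x y h; rewrite -opprB; apply: PN.
- by move=> x y z h1 h2; have := PD h1 h2; rewrite addrA subrK.
- move=> x x' y y' h1 h2; have := PD h1 h2.
  by rewrite opprD addrACA.
- by move=> x x' h; rewrite -opprD; apply: PN.
- by move=> r x x' h; rewrite -scalerBr; apply: PZ.
- by move=> x y z /=; rewrite addrA subrr.
- by move=> x y /=; rewrite [x + y]addrC subrr.
- by move=> x /=; rewrite add0r subrr.
- by move=> x /=; rewrite addNr subrr.
- by move=> a b x /=; rewrite scalerA subrr.
- by move=> x /=; rewrite scale1r subrr.
- by move=> a x y /=; rewrite scalerDr subrr.
- by move=> a b x /=; rewrite scalerDl subrr.
Defined.

Definition mquot : lmodType R := quot mdata.
Definition mpi (x : V) : mquot := @qpi R mdata x.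
Lemma mpi_lin : linear mpi.
Proof.
move=> a u v.
rewrite /mpi -(qpiZ (D := mdata)) -(qpiD (D := mdata)) //.
Qed.
Lemma mpi0 x : mpi x = 0 <-> P x.
Proof.
split.
  move=> h; have := qpi_eqv (D := mdata) (x := x) (y := 0) h.
  by rewrite /= subr0.
by move=> h; apply: (qpi_eq (D := mdata)); rewrite /= subr0.
Qed.
Lemma mpiD x y : mpi (x + y) = mpi x + mpi y.
Proof. exact: (qpiD (D := mdata)). Qed.
Lemma mpiZ r x : mpi (r *: x) = r *: mpi x.
Proof. exact: (qpiZ (D := mdata)). Qed.
Lemma mpiN x : mpi (- x) = - mpi x.
Proof. exact: (qpi_opp (D := mdata)). Qed.
Lemma mpiB x y : mpi (x - y) = mpi x - mpi y.
Proof. by rewrite mpiD mpiN. Qed.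
Lemma mpi_eq x y : mpi x = mpi y <-> P (x - y).
Proof.
split; first exact: (qpi_eqv (D := mdata)).
exact: (qpi_eq (D := mdata)).
Qed.
Lemma mpi_surj (q : mquot) : exists x, mpi x = q.
Proof. by elim/(quot_ind (D := mdata)): q => x; exists x. Qed.
End ModQuot.

Section Helpers.
Variable R : comPzRingType.

Lemma linear_inj (U V : lmodType R) (f : {linear U -> V}) :
  (forall x, f x = 0 -> x = 0) -> injective f.
Proof. by move=> h x y e; apply/eqP; rewrite -subr_eq0; apply/eqP/h; rewrite linearB e subrr. Qed.

Lemma tensor_ext_fun (A N T : lmodType R) (beta : A -> N -> T) (ht : is_tensor beta)
  (M : lmodType R) (h1 h2 : T -> M) (l1 : linear h1) (l2 : linear h2) :
  (forall a n, h1 (beta a n) = h2 (beta a n)) -> forall t, h1 t = h2 t.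
Proof. by move=> e t; have := tensor_ext ht (h1 := linw l1) (h2 := linw l2) e t. Qed.

Lemma bil0l (A N T : lmodType R) (beta : A -> N -> T) : bilinear beta ->
  forall n, beta 0 n = 0.
Proof.
case=> b1 _ _ _ n; have := b1 0 0 n; rewrite addr0 => h.
by apply: (addrI (beta 0 n)); rewrite addr0 -h.
Qed.

Lemma bil_comp (A A' N T : lmodType R) (beta : A -> N -> T) (j : {linear A' -> A}) :
  bilinear beta -> bilinear (fun a n => beta (j a) n).
Proof. by case=> b1 b2 b3 b4; split=> *; rewrite ?linearD ?linearZ ?b1 ?b2 ?b3 ?b4. Qed.
End Helpers.

Lemma bilB (R : comPzRingType) (A N T : lmodType R) (beta : A -> N -> T) : bilinear beta ->
  forall x y n, beta (x - y) n = beta x n - beta y n.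
Proof. by case=> b1 b2 _ _ x y n; rewrite -scaleN1r b1 b2 scaleN1r. Qed.

Section OneToTwo.
Variables (R : comPzRingType) (E : lmodType R).
Hypothesis hE : absolutely_pure E.
Variable S : R -> Prop.
Hypothesis hS2 : forall s, S s -> S (s * s).

Lemma abs_pure_uS : u_S_absolutely_pure S E.
Proof.
move=> B C f g [s Ss [k1 k2 k3 k4]].
move=> N TA TB TC bA bB bC tA tB tC fN gN hfN hgN.
have bilA := proj1 tA; have bilB' := proj1 tB; have bilC := proj1 tC.
have [bA1 bA2 bA3 bA4] := bilA; have [bB1 bB2 bB3 bB4] := bilB'; have [bC1 bC2 bC3 bC4] := bilC.
have k4' c : exists b, g b == s *: c by have [b hb] := k4 c; exists b; apply/eqP.
pose bp c := xchoose (k4' c).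
have hbp c : g (bp c) = s *: c by apply/eqP; exact: (xchooseP (k4' c)).
exists (s * s); first exact: hS2.
split.
-
  pose PP := fun v : (E * B)%type => exists e, v = (s *: e, - f e).
  have PP0 : PP 0 by exists 0; rewrite scaler0 linear0 oppr0.
  have PPD x y : PP x -> PP y -> PP (x + y).
    by move=> [e1 ->] [e2 ->]; exists (e1 + e2); rewrite scalerDr linearD opprD.
  have PPZ r x : PP x -> PP (r *: x).
    move=> [e ->]; exists (r *: e).
    have -> : r *: ((s *: e, - f e) : E * B) = (r *: (s *: e), r *: - f e) by [].
    have -> : f (r *: e) = r *: f e by rewrite linearZ.
    by rewrite scalerC scalerN.
  pose Q := mquot PP0 PPD PPZ.
  pose j := fun e : E => mpi PP0 PPD PPZ (e, 0).
  pose psi := fun b : B => mpi PP0 PPD PPZ (0, b).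
  have jlin : linear j.
    move=> a u v; rewrite /j -mpiZ -mpiD; congr (mpi _ _ _ _).
    have -> : a *: ((u, 0) : E * B) + (v, 0) = (a *: u + v, a *: 0 + 0) by [].
    by rewrite scaler0 addr0.
  have psilin : linear psi.
    move=> a u v; rewrite /psi -mpiZ -mpiD; congr (mpi _ _ _ _).
    have -> : a *: ((0, u) : E * B) + (0, v) = (a *: 0 + 0, a *: u + v) by [].
    by rewrite scaler0 addr0.
  have jinj : forall e, linw jlin e = 0 -> e = 0.
    move=> e /mpi0 [e0 [-> h0]].
    have : f e0 = 0 by apply/eqP; rewrite -oppr_eq0 -h0.
    exact: k1.
  have key e : j (s *: e) = psi (f e).
    apply/mpi_eq; exists e.
    have -> : ((s *: e, 0) : E * B) - (0, f e) = (s *: e - 0, 0 - f e) by [].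
    by rewrite subr0 sub0r.
  have pure := hE (linear_inj jinj).
  have tQ := tensor_is_tensor Q N.
  have [jN hjN] := tensor_lift tA (bil_comp (linw jlin) (proj1 tQ)).
  have [psiN hpsiN] := tensor_lift tB (bil_comp (linw psilin) (proj1 tQ)).
  have jNinj := (proj2 pure) N TA (tensT Q N) bA (@tbeta R Q N) tA tQ jN hjN.
  have l1 : linear (fun t => jN (s *: t)).
    by move=> a u v; rewrite scalerDr scalerC linearP.
  have l2 : linear (fun t => psiN (fN t)) by move=> a u v; rewrite !linearP.
  have eq1 t : jN (s *: t) = psiN (fN t).
    apply: (tensor_ext_fun tA l1 l2 _ t) => e n /=.
    by rewrite -bA2 hjN hfN hpsiN /= /linw key.
  move=> t ht; have : jN (s *: t) = jN 0 by rewrite eq1 ht !linear0.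
  by move/jNinj => st; rewrite -scalerA st scaler0.
-
  pose P2 := fun t : TB => exists a, fN a = t.
  have P20 : P2 0 by exists 0; rewrite linear0.
  have P2D x y : P2 x -> P2 y -> P2 (x + y).
    by move=> [b1 <-] [b2 <-]; exists (b1 + b2); rewrite linearD.
  have P2Z r x : P2 x -> P2 (r *: x).
    by move=> [b <-]; exists (r *: b); rewrite linearZ.
  pose q2 := mpi P20 P2D P2Z.
  pose phi := fun c n => q2 (s *: bB (bp c) n).
  have wd c n b : g b = s *: c -> phi c n = q2 (s *: bB b n).
    move=> hb; apply/mpi_eq.
    have hz : g (bp c - b) = 0 by rewrite linearB hbp hb subrr.
    have [a ha] := k2 _ hz.
    by exists (bA a n); rewrite hfN ha bB2 (bilB bilB') scalerBr.
  have bphi : bilinear phi.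
    split.
    - move=> c1 c2 n; rewrite (wd (c1 + c2) n (bp c1 + bp c2)); last first.
        by rewrite linearD !hbp scalerDr.
      by rewrite /phi /q2 bB1 scalerDr mpiD.
    - move=> r c n; rewrite (wd (r *: c) n (r *: bp c)); last first.
        by rewrite linearZ hbp /= scalerC.
      by rewrite /phi /q2 bB2 scalerC mpiZ.
    - by move=> c n1 n2; rewrite /phi /q2 bB3 scalerDr mpiD.
    - by move=> r c n; rewrite /phi /q2 bB4 scalerC mpiZ.
  have [h hh] := tensor_lift tC bphi.
  have l1 : linear (fun t => h (gN t)) by move=> a u v; rewrite !linearP.
  have l2 : linear (fun t => q2 ((s * s) *: t)).
    by move=> a u v; rewrite /q2 scalerDr scalerC mpiD mpiZ.
  have eq2 t : h (gN t) = q2 ((s * s) *: t).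
    apply: (tensor_ext_fun tB l1 l2 _ t) => b n /=.
    rewrite hgN hh (wd _ _ (s *: b)); last by rewrite linearZ.
    by rewrite bB2 scalerA.
  move=> b hb; have : q2 ((s * s) *: b) = 0 by rewrite -eq2 hb linear0.
  by move/mpi0.
-
  have aux t : gN (s *: fN t) = 0.
    have l1 : linear (fun t => gN (s *: fN t)).
      by move=> a u v; rewrite linearP scalerDr scalerC linearP.
    have l2 : linear (fun t : TA => 0 : TC) by move=> a u v; rewrite scaler0 addr0.
    apply: (tensor_ext_fun tA l1 l2) => e n /=.
    rewrite hfN -bB2 hgN k3; exact: bil0l.
  move=> a; have e : s *: fN a = fN (s *: a) by rewrite linearZ.
  by rewrite -scalerA e aux.
-
  pose P3 := fun t : TC => exists b, gN b = t.
  have P30 : P3 0 by exists 0; rewrite linear0.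
  have P3D x y : P3 x -> P3 y -> P3 (x + y).
    by move=> [b1 <-] [b2 <-]; exists (b1 + b2); rewrite linearD.
  have P3Z r x : P3 x -> P3 (r *: x).
    by move=> [b <-]; exists (r *: b); rewrite linearZ.
  pose q3 := mpi P30 P3D P3Z.
  have l1 : linear (fun t => q3 (s *: t)).
    by move=> a u v; rewrite /q3 scalerDr scalerC mpi_lin.
  have l2 : linear (fun t : TC => 0 : mquot P30 P3D P3Z).
    by move=> a u v; rewrite scaler0 addr0.
  have aux t : q3 (s *: t) = 0.
    apply: (tensor_ext_fun tC l1 l2 _ t) => c n /=.
    apply/mpi0; exists (bB (bp c) n); by rewrite hgN hbp bC2.
  move=> c; have /mpi0 [b hb] := aux c.
  by exists (s *: b); rewrite linearZ hb /= scalerA.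
Qed.
End OneToTwo.

Section Ideals.
Variable R : comPzRingType.

Lemma max_prime (m : R -> Prop) : maximal_ideal m -> prime_ideal m.
Proof.
case=> hm m1 mmax; split => //.
case: hm => m0 mD mM.
move=> x y mxy; have [mx|nmx] := pselect (m x); first by left.
right.
pose J z := exists a r, m a /\ z = a + r * x.
have hJ : ideal J.
  split.
  - by exists 0, 0; rewrite mul0r addr0.
  - move=> z1 z2 [a1 [r1 [ma1 ->]]] [a2 [r2 [ma2 ->]]].
    exists (a1 + a2), (r1 + r2); split; first exact: mD.
    by rewrite mulrDl addrACA.
  - move=> r z [a [r1 [ma ->]]]; exists (r * a), (r * r1); split; first exact: mM.
    by rewrite mulrDr mulrA.
have sub : forall z, m z -> J z by move=> z mz; exists z, 0; rewrite mul0r addr0.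
case: (mmax J hJ sub) => [eqJ|[a [r [ma e]]]].
  by exfalso; apply: nmx; apply/eqJ; exists 0, 1; rewrite mul1r add0r.
have -> : y = a * y + r * (x * y) by rewrite mulrA -mulrDl -e mul1r.
apply: mD; last exact: mM.
by rewrite mulrC; apply: mM.
Qed.

Lemma exists_max (J : R -> Prop) : ideal J -> ~ J 1 ->
  exists m, maximal_ideal m /\ (forall x, J x -> m x).
Proof.
move=> hJ nJ1.
pose T := {I : R -> Prop | ideal I /\ (forall x, J x -> I x) /\ ~ I 1}.
pose Rl : rel T := fun I1 I2 => `[< forall x, sval I1 x -> sval I2 x >].
have := @classical_sets.Zorn T Rl.
case.
- by move=> t; apply/asboolP.
- by move=> r s t /asboolP h1 /asboolP h2; apply/asboolP => x /h1 /h2.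
- move=> [s hs] [t ht] /asboolP h1 /asboolP h2 /=.
  have est : s = t by apply: funext => x; apply: propext; split; [apply: h1|apply: h2].
  subst t; congr exist; exact: Prop_irrelevance.
- move=> A tot.
  have [[t0 At0]|nA] := pselect (exists t, A t); last first.
    exists (exist _ J (conj hJ (conj (fun x h => h) nJ1))) => s As.
    by exfalso; apply: nA; exists s.
  pose U x := exists I, A I /\ sval I x.
  have hU : ideal U.
    split.
    - by exists t0; split => //; case: (svalP t0) => [[]].
    - move=> x y [I1 [A1 x1]] [I2 [A2 y2]].
      have [/asboolP h|/asboolP h] := tot I1 I2 A1 A2.
        by exists I2; split => //; case: (svalP I2) => [[_ hD _] _]; apply: hD => //; apply: h.
      by exists I1; split => //; case: (svalP I1) => [[_ hD _] _]; apply: hD => //; apply: h.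
    - move=> r x [I [AI xI]]; exists I; split => //.
      by case: (svalP I) => [[_ _ hM] _]; apply: hM.
  have JU : forall x, J x -> U x.
    by move=> x Jx; exists t0; split => //; case: (svalP t0) => [_ [h _]]; apply: h.
  have nU1 : ~ U 1 by move=> [I [_ I1]]; case: (svalP I) => [_ [_ h]]; apply: h.
  exists (exist _ U (conj hU (conj JU nU1))) => s As; apply/asboolP => x sx.
  by exists s.
move=> t tmax; exists (sval t).
case: (svalP t) => [ht [Jt nt1]]; split => //.
split => // K hK tK.
have [K1|nK1] := pselect (K 1); first by right.
left.
have JK : forall x, J x -> K x by move=> x /Jt /tK.
pose sK : T := exist _ K (conj hK (conj JK nK1)).
have : Rl t sK by apply/asboolP.
move/tmax => e x; have -> : K = sval sK by [].
by rewrite e.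
Qed.
End Ideals.

Section ThreeToOne.
Variables (R : comPzRingType) (E : lmodType R).
Hypothesis H : forall m : R -> Prop, maximal_ideal m -> u_p_absolutely_pure m E.

Lemma max_to_abs : absolutely_pure E.
Proof.
move=> B f finj; split => // N TE TB bE bB tE tB fN hfN.
apply: linear_inj => t ht.
pose P := fun b : B => exists e, f e = b.
have P0 : P 0 by exists 0; rewrite linear0.
have PD x y : P x -> P y -> P (x + y).
  by move=> [b1 <-] [b2 <-]; exists (b1 + b2); rewrite linearD.
have PZ r x : P x -> P (r *: x).
  by move=> [b <-]; exists (r *: b); rewrite linearZ.
pose C := mquot P0 PD PZ.
pose gL := linw (mpi_lin P0 PD PZ).
have tC := tensor_is_tensor C N.
have [gN hgN] := tensor_lift tB (bil_comp gL (proj1 tC)).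
have ann : forall m, maximal_ideal m -> exists2 s, ~ m s & s *: t = 0.
  move=> m hm.
  have ex : u_S_exact (fun r => ~ m r) f gL.
    exists 1; first by case: hm.
    split.
    - by move=> a fa; rewrite scale1r; apply: finj; rewrite fa linear0.
    - by move=> b /mpi0 [a ha]; exists a; rewrite scale1r.
    - by move=> a; apply/mpi0; exists a; rewrite scale1r.
    - by move=> c; have [b hb] := mpi_surj c; exists b; rewrite scale1r.
  have := H hm ex tE tB tC hfN hgN.
  by case=> s ns [k1 _ _ _]; exists s => //; apply: k1.
pose Jt := fun r : R => r *: t = 0.
have hJt : ideal Jt.
  split.
  - by rewrite /Jt scale0r.
  - by move=> x y hx hy; rewrite /Jt scalerDl hx hy addr0.
  - by move=> r x hx; rewrite /Jt -scalerA hx scaler0.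
have [J1|nJ1] := pselect (Jt 1); first by rewrite -[t]scale1r.
have [m [hm Jm]] := exists_max hJt nJ1.
have [s ns st] := ann m hm.
by exfalso; apply: ns; apply: Jm.
Qed.
End ThreeToOne.

Unset Implicit Arguments.

Theorem proposition3p4 (R : comPzRingType) (E : lmodType R) :
  (absolutely_pure E <->
     (forall p : R -> Prop, prime_ideal p -> u_p_absolutely_pure p E)) /\
  (absolutely_pure E <->
     (forall m : R -> Prop, maximal_ideal m -> u_p_absolutely_pure m E)).
Proof.
have sq (p : R -> Prop) : prime_ideal p -> forall s, ~ p s -> ~ p (s * s).
  by case=> _ _ pm s ns /pm [].
split; split.
- by move=> hE p hp; apply: abs_pure_uS => //; apply: sq.
- by move=> h; apply: max_to_abs => m hm; apply: h; apply: max_prime.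
- by move=> hE m hm; apply: abs_pure_uS => //; apply: sq; apply: max_prime.
- exact: max_to_abs.
Qed.
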